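(* Let $q$ be a prime, $r\geq 2$ and $k\geq 4$, and let $(f_1,f_2,\dots,f_r)$ be an $r$-tuple of Latin hypercubes of order $q$ and dimension $k$ (not necessarily mutually orthogonal). Suppose that for every two distinct indices $i,j\in[r]$ and every way of fixing the same $k-3$ of the $k$ arguments to the same values in both $f_i$ and $f_j$, the resulting pair of Latin hypercubes of dimension $3$ is a linear pair. Then $(f_1,f_2,\dots,f_r)$ is a linear $r$-tuple of Latin hypercubes.
   Context: $[m]=\{1,\dots,m\}$. A Latin hypercube of order $q$ and dimension $k$ is a function $f:\mathbb{F}_q^k\to\mathbb{F}_q$ such that, whenever any $k-1$ of the arguments are fixed, the resulting function of the remaining argument is a bijection of $\mathbb{F}_q$ (equivalently, every $q\times q$ subarray obtained by fixing $k-2$ arguments is a Latin square). Fixing some arguments of a Latin hypercube to constants yields a Latin hypercube of smaller dimension in the remaining arguments. An $r$-tuple $(f_1,\dots,f_r)$ of Latin hypercubes of order $q$ and dimension $k$ is linear if there exist permutations $\alpha_1,\dots,\alpha_k,\beta_1,\dots,\beta_r$ of $\mathbb{F}_q$ and coefficients $a_{i,j}\in\mathbb{F}_q$ ($i\in[r]$, $j\in[k]$) such that for every $i\in[r]$ and all $x\in\mathbb{F}_q^k$, $\beta_i(f_i(x_1,\dots,x_k))=a_{i,1}\alpha_1(x_1)+\cdots+a_{i,k}\alpha_k(x_k)$. A linear pair is a linear $2$-tuple. *)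

(* Defs.v *)
From HB Require Import structures.
From mathcomp Require Import all_boot all_order all_algebra all_fingroup.
Set Implicit Arguments. Unset Strict Implicit. Unset Printing Implicit Defensive.
Import GRing.Theory.
Local Open Scope ring_scope.

Definition hyper (F : finFieldType) (k : nat) := {ffun 'I_k -> F} -> F.

Definition upd (F : finFieldType) (k : nat) (x : {ffun 'I_k -> F}) (j : 'I_k) (a : F)
  : {ffun 'I_k -> F} := [ffun i => if i == j then a else x i].

Definition latin_hypercube (F : finFieldType) (k : nat) (f : hyper F k) : Prop :=
  forall (x : {ffun 'I_k -> F}) (j : 'I_k), bijective (fun a : F => f (upd x j a)).

Definition linear_tuple (F : finFieldType) (r k : nat) (f : 'I_r -> hyper F k) : Prop :=
  exists (alpha : 'I_k -> {perm F}) (beta : 'I_r -> {perm F}) (a : 'I_r -> 'I_k -> F),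
    forall (i : 'I_r) (x : {ffun 'I_k -> F}),
      beta i (f i x) = \sum_(j < k) a i j * alpha j (x j).

Definition linear_pair (F : finFieldType) (k : nat) (g h : hyper F k) : Prop :=
  linear_tuple (fun t : 'I_2 => if val t == 0%N then g else h).

(* Restriction of f: the arguments outside the image of e are fixed to the
   values of x; the m free arguments, in the order given by e, are the new ones. *)
Definition restrict (F : finFieldType) (k m : nat) (f : hyper F k)
  (e : 'I_m -> 'I_k) (x : {ffun 'I_k -> F}) : hyper F m :=
  fun y => f [ffun i => if [pick t | e t == i] is Some t then y t else x i].

(* Main.v *)
Require Import Defs.
From HB Require Import structures.
From mathcomp Require Import all_boot all_order all_algebra all_fingroup.
From mathcomp Require Import ring.
Set Implicit Arguments. Unset Strict Implicit. Unset Printing Implicit Defensive.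
Import GRing.Theory.
Local Open Scope ring_scope.


Lemma Fp_additive (q : nat) (Hq : prime q) (P : 'F_q -> 'F_q) :
  (forall s t, P (s + t) = P s + P t) -> forall w, P w = w * P 1.
Proof.
move=> HP w.
have P0 : P 0 = 0.
  have H := HP 0 0; rewrite addr0 in H.
  by apply: (addrI (P 0)); rewrite addr0 -H.
have Hn : forall n : nat, P n%:R = n%:R * P 1.
  elim=> [|n IH]; first by rewrite P0 mul0r.
  by rewrite -[n.+1]addn1 natrD HP IH mulrDl mul1r.
have -> : w = (val w)%:R.
  apply/val_inj; rewrite /= val_Fp_nat // modn_small //.
  by case: w => m /=; rewrite Fp_cast.
exact: Hn.
Qed.


Unset Implicit Arguments.
Section Gen.
Variables (F : finFieldType) (k : nat).
Implicit Types (x y z : {ffun 'I_k -> F}) (g : hyper F k).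

Definition ag x z (j l m : 'I_k) :=
  forall i, i != j -> i != l -> i != m -> z i = x i.

Definition Par (B : F -> F) g x (j l : 'I_k) := forall u v,
  B (g (upd (upd x j u) l v)) + B (g x) = B (g (upd x j u)) + B (g (upd x l v)).

Lemma updE x j a i : upd x j a i = if i == j then a else x i.
Proof. by rewrite ffunE. Qed.

Lemma coordE (H : F -> F) y (p s i : 'I_k) u v : p != s ->
  H ((upd (upd y p u) s v) i) + H (y i) = H ((upd y p u) i) + H ((upd y s v) i).
Proof.
move=> ps; rewrite !updE; case: (eqVneq i s) => [->|_].
  by rewrite eq_sym (negbTE ps) addrC.
by [].
Qed.

Lemma ag_refl x j l m : ag x x j l m. Proof. by []. Qed.

Lemma ag_upd x y j l m p u : ag x y j l m -> [|| p == j, p == l | p == m] ->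
  ag x (upd y p u) j l m.
Proof.
move=> H hp i ij il im; rewrite updE; case: (eqVneq i p) => [ip|_]; last exact: H.
by move: hp; rewrite -ip (negbTE ij) (negbTE il) (negbTE im).
Qed.

Lemma par_of_form (B : F -> F) g x x' j l m p s (c d : F) (H1 H2 H3 : F -> F) :
  (forall z, ag x z j l m -> B (g z) = c * (H1 (z j) + H2 (z l) + H3 (z m)) + d) ->
  ag x x' j l m -> [|| p == j, p == l | p == m] -> [|| s == j, s == l | s == m] ->
  p != s -> Par B g x' p s.
Proof.
move=> Hf ax hp hs ps u v.
have a1 := ag_upd _ _ _ _ _ _ u ax hp; have a2 := ag_upd _ _ _ _ _ _ v ax hs.
have a3 := ag_upd _ _ _ _ _ _ v a1 hs.
rewrite (Hf _ a1) (Hf _ a2) (Hf _ a3) (Hf _ ax).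
have E1 := @coordE H1 x' p s j u v ps; have E2 := @coordE H2 x' p s l u v ps;
have E3 := @coordE H3 x' p s m u v ps.
apply: (@addIr _ (- (c * (H1 (x' j) + H2 (x' l) + H3 (x' m)) + d))).
have -> : c * (H1 ((upd (upd x' p u) s v) j) + H2 ((upd (upd x' p u) s v) l) +
   H3 ((upd (upd x' p u) s v) m)) + d + (c * (H1 (x' j) + H2 (x' l) + H3 (x' m)) + d)
   = c * ((H1 ((upd (upd x' p u) s v) j) + H1 (x' j)) + (H2 ((upd (upd x' p u) s v) l) + H2 (x' l)) + (H3 ((upd (upd x' p u) s v) m) + H3 (x' m))) + d + d by ring.
rewrite E1 E2 E3.
by ring.
Qed.

Definition face1 g := forall x (j l m : 'I_k), j != l -> l != m -> j != m ->
  exists (be : {perm F}) (A1 A2 A3 : F -> F), forall z, ag x z j l m ->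
    be (g z) = A1 (z j) + A2 (z l) + A3 (z m).

Hypothesis Hadd : forall P : F -> F, (forall s t, P (s + t) = P s + P t) ->
  forall w, P w = w * P 1.

Lemma key (B : F -> F) g x (j l m : 'I_k) (be : {perm F}) (A1 A2 A3 : F -> F) :
  latin_hypercube g -> j != l -> l != m -> j != m -> Par B g x j l ->
  (forall z, ag x z j l m -> be (g z) = A1 (z j) + A2 (z l) + A3 (z m)) ->
  exists c d, forall w : F, B w = c * be w + d.
Proof.
move=> Hlat jl lm jm HP Hf.
have Ejl := negbTE jl; have Elm := negbTE lm; have Ejm := negbTE jm.
have Elj : (l == j) = false by rewrite eq_sym Ejl.
have Eml : (m == l) = false by rewrite eq_sym Elm.
have Emj : (m == j) = false by rewrite eq_sym Ejm.
have jl' : [|| j == j, j == l | j == m] by rewrite eqxx.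
have ll' : [|| l == j, l == l | l == m] by rewrite eqxx orbT.
have Fu u : be (g (upd x j u)) = A1 u + A2 (x l) + A3 (x m).
  rewrite (Hf _ (ag_upd _ _ _ _ _ _ u (ag_refl x j l m) jl')) !updE eqxx.
  by rewrite ?Ejl ?Elj ?Elm ?Eml ?Ejm ?Emj.
have Fv v : be (g (upd x l v)) = A1 (x j) + A2 v + A3 (x m).
  rewrite (Hf _ (ag_upd _ _ _ _ _ _ v (ag_refl x j l m) ll')) !updE eqxx.
  by rewrite ?Ejl ?Elj ?Elm ?Eml ?Ejm ?Emj.
have Fuv u v : be (g (upd (upd x j u) l v)) = A1 u + A2 v + A3 (x m).
  rewrite (Hf _ (ag_upd _ _ _ _ _ _ v (ag_upd _ _ _ _ _ _ u (ag_refl x j l m) jl') ll')) !updE !eqxx.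
  by rewrite ?Ejl ?Elj ?Elm ?Eml ?Ejm ?Emj.
have Fx : be (g x) = A1 (x j) + A2 (x l) + A3 (x m).
  by rewrite (Hf _ (ag_refl x j l m)).
have inj1 : injective A1.
  move=> u1 u2 E.
  have [h hK _] := Hlat x j.
  rewrite -(hK u1) -(hK u2); congr h; apply: (perm_inj (s := be)).
  by rewrite !Fu E.
have inj2 : injective A2.
  move=> u1 u2 E.
  have [h hK _] := Hlat x l.
  rewrite -(hK u1) -(hK u2); congr h; apply: (perm_inj (s := be)).
  by rewrite !Fv E.
have [h1 _ h1K] := injF_bij inj1.
have [h2 _ h2K] := injF_bij inj2.
pose w0 := be (g x).
pose psi w := B ((be^-1)%g w).
have psiE (y : F) : psi (be y) = B y by rewrite /psi permK.
pose Psi w := psi (w + w0) - psi w0.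
have addP : forall s t, Psi (s + t) = Psi s + Psi t.
  move=> s t.
  pose u := h1 (s + A1 (x j)); pose v := h2 (t + A2 (x l)).
  have Hu : A1 u = s + A1 (x j) by rewrite /u h1K.
  have Hv : A2 v = t + A2 (x l) by rewrite /v h2K.
  have e1 : s + t + w0 = be (g (upd (upd x j u) l v)).
    by rewrite Fuv Hu Hv /w0 Fx; ring.
  have e2 : s + w0 = be (g (upd x j u)) by rewrite Fu Hu /w0 Fx; ring.
  have e3 : t + w0 = be (g (upd x l v)) by rewrite Fv Hv /w0 Fx; ring.
  have e4 : psi w0 = B (g x) by rewrite psiE.
  rewrite /Psi e1 e2 e3 !psiE.
  have := HP u v.
  move=> HH.
  apply: (@addIr _ (B (g x) + B (g x))).
  have -> : B (g (upd (upd x j u) l v)) - B (g x) + (B (g x) + B (g x)) =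
     B (g (upd (upd x j u) l v)) + B (g x) by ring.
  rewrite HH; ring.
exists (Psi 1), (psi w0 - w0 * Psi 1) => y0.
have := Hadd Psi addP (be y0 - w0).
rewrite /Psi subrK psiE => E.
have -> : B y0 = (B y0 - psi w0) + psi w0 by ring.
rewrite E; ring.
Qed.



Lemma third (a b : 'I_k) : (3 <= k)%N -> exists m : 'I_k, (m != a) && (m != b).
Proof.
move=> Hk.
have H0 : (0 < k)%N by apply: leq_trans Hk.
have H1 : (1 < k)%N by apply: leq_trans Hk.
have H2 : (2 < k)%N by [].
case h0: ((Ordinal H0 != a) && (Ordinal H0 != b)); first by exists (Ordinal H0).
case h1: ((Ordinal H1 != a) && (Ordinal H1 != b)); first by exists (Ordinal H1).
case h2: ((Ordinal H2 != a) && (Ordinal H2 != b)); first by exists (Ordinal H2).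
exfalso.
move/negbT: h0; rewrite negb_and !negbK => /orP [] /eqP/(congr1 val) /= h0;
move/negbT: h1; rewrite negb_and !negbK => /orP [] /eqP/(congr1 val) /= h1;
move/negbT: h2; rewrite negb_and !negbK => /orP [] /eqP/(congr1 val) /= h2;
congruence.
Qed.

Variables (B : F -> F) (g : hyper F k).
Hypothesis Hlat : latin_hypercube g.
Hypothesis Hface : face1 g.

Lemma step x x' (j l m p s : 'I_k) : Par B g x j l -> j != l -> l != m -> j != m ->
  ag x x' j l m -> [|| p == j, p == l | p == m] -> [|| s == j, s == l | s == m] ->
  p != s -> Par B g x' p s.
Proof.
move=> HP jl lm jm ax hp hs ps.
have [be [A1 [A2 [A3 Hf]]]] := Hface x j l m jl lm jm.
have [c [d Bf]] := key B g x j l m be A1 A2 A3 Hlat jl lm jm HP Hf.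
apply: (par_of_form B g x x' j l m p s c d A1 A2 A3) => // z az.
by rewrite Bf Hf.
Qed.

Lemma step' x x' (a b m p s : 'I_k) : Par B g x a b -> a != b ->
  (m != a) && (m != b) ->
  ag x x' a b m -> [|| p == a, p == b | p == m] -> [|| s == a, s == b | s == m] ->
  p != s -> Par B g x' p s.
Proof.
move=> HP ab /andP [ma mb]; apply: (step x x' a b m p s HP ab); by rewrite eq_sym.
Qed.

Hypothesis Hk3 : (3 <= k)%N.

Lemma pairA x (a b a' b' : 'I_k) : Par B g x a b -> a != b -> a' != b' ->
  [|| a' == a, a' == b, b' == a | b' == b] -> Par B g x a' b'.
Proof.
move=> HP ab ab' Hd.
case H1: ((a' != a) && (a' != b)).
  have Hs : (b' == a) || (b' == b).
    by move: Hd; case/andP: H1 => /negbTE -> /negbTE ->.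
  apply: (step' x x a b a' a' b' HP ab H1) => //; first by rewrite eqxx !orbT.
  by case/orP: Hs => ->; rewrite ?orbT.
have Hp : (a' == a) || (a' == b) by move/negbT: H1; rewrite negb_and !negbK.
case H2: ((b' != a) && (b' != b)).
  apply: (step' x x a b b' a' b' HP ab H2) => //; last by rewrite eqxx !orbT.
  by case/orP: Hp => ->; rewrite ?orbT.
have Hs : (b' == a) || (b' == b) by move/negbT: H2; rewrite negb_and !negbK.
have [m Hm] := third a b Hk3.
apply: (step' x x a b m a' b' HP ab Hm) => //.
  by case/orP: Hp => ->; rewrite ?orbT.
by case/orP: Hs => ->; rewrite ?orbT.
Qed.

Lemma ctxA x (a b n : 'I_k) t : Par B g x a b -> a != b -> Par B g (upd x n t) a b.
Proof.
move=> HP ab.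
have [m [Hm Hn]] : exists m, ((m != a) && (m != b)) /\ [|| n == a, n == b | n == m].
  case H1: ((n != a) && (n != b)); first by exists n; rewrite eqxx !orbT.
  have [m Hm] := third a b Hk3; exists m; split => //.
  by move/negbT: H1; rewrite negb_and !negbK => /orP [] ->; rewrite ?orbT.
apply: (step' x (upd x n t) a b m a b HP ab Hm) => //.
- exact: ag_upd.
- by rewrite eqxx.
- by rewrite eqxx orbT.
Qed.

Definition z0 : {ffun 'I_k -> F} := [ffun _ => 0].
Definition pre x n : {ffun 'I_k -> F} := [ffun i : 'I_k => if (i < n)%N then x i else 0].

Lemma pre0 x : pre x 0 = z0.
Proof. by apply/ffunP => i; rewrite !ffunE. Qed.

Lemma preS x n (Hn : (n < k)%N) :
  pre x n.+1 = upd (pre x n) (Ordinal Hn) (x (Ordinal Hn)).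
Proof.
apply/ffunP => i; rewrite !ffunE; case: (eqVneq i (Ordinal Hn)) => [->|ne] /=.
  by rewrite ltnSn.
rewrite ltnS leq_eqVlt; have -> : (nat_of_ord i == n) = false => //.
by apply/negbTE; apply: contra ne => /eqP e; apply/eqP/val_inj.
Qed.

Lemma preK x : pre x k = x.
Proof. by apply/ffunP => i; rewrite ffunE ltn_ord. Qed.

Lemma par_all (a0 b0 : 'I_k) : Par B g z0 a0 b0 -> a0 != b0 ->
  forall x (a b : 'I_k), a != b -> Par B g x a b.
Proof.
move=> HP ab0 x a b ab.
have HPz : Par B g z0 a b.
  pose w := if a == a0 then b0 else a0.
  have aw : a != w by rewrite /w; case: (eqVneq a a0) => [->|].
  have H1 : Par B g z0 a w.
    apply: (pairA z0 a0 b0 a w HP ab0 aw).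
    by rewrite /w; case: (a == a0); rewrite eqxx !orbT.
  by apply: (pairA z0 a w a b H1 aw ab); rewrite eqxx.
rewrite -(preK x).
have : (k <= k)%N by [].
elim: {1 3}k => [|n IH] Hn; first by rewrite pre0.
rewrite (preS x n Hn); apply: ctxA => //; apply: IH; exact: ltnW.
Qed.

Lemma sum_form : (B (g z0) = 0) -> (forall x (a b : 'I_k), a != b -> Par B g x a b) ->
  forall x, B (g x) = \sum_(j < k) B (g (upd z0 j (x j))).
Proof.
move=> Hz HP x.
have inner : forall (p : 'I_k) m u, (m <= p)%N ->
    B (g (upd (pre x m) p u)) - B (g (pre x m)) = B (g (upd z0 p u)).
  move=> p; elim=> [|m IH] u Hm; first by rewrite pre0 Hz subr0.
  have Hmk : (m < k)%N := leq_trans Hm (ltnW (ltn_ord p)).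
  rewrite (preS x m Hmk) -(IH u (ltnW Hm)).
  have ne : Ordinal Hmk != p.
    by apply/eqP => /(congr1 val) /= e; move: Hm; rewrite e ltnn.
  have := HP (pre x m) (Ordinal Hmk) p ne (x (Ordinal Hmk)) u.
  move=> E.
  set P1 := B (g (upd (upd _ _ _) _ _)) in E *.
  have -> : P1 = B (g (upd (pre x m) (Ordinal Hmk) (x (Ordinal Hmk)))) + B (g (upd (pre x m) p u)) - B (g (pre x m)).
    by rewrite -E; ring.
  ring.
have outer : forall n, (n <= k)%N ->
    B (g (pre x n)) = \sum_(j < k | (j < n)%N) B (g (upd z0 j (x j))).
  elim=> [|n IH] Hn; first by rewrite pre0 Hz big_pred0 // => j.
  rewrite (bigD1 (Ordinal Hn)) /=; last exact: ltnSn.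
  rewrite (preS x n Hn).
  have := inner (Ordinal Hn) n (x (Ordinal Hn)) (leqnn n).
  move=> E; rewrite -E IH; last exact: ltnW.
  have -> : \sum_(i < k | (i < n.+1)%N && (i != Ordinal Hn)) B (g (upd z0 i (x i)))
    = \sum_(j < k | (j < n)%N) B (g (upd z0 j (x j))).
    apply: eq_bigl => j.
    rewrite ltnS leq_eqVlt; case: (eqVneq j (Ordinal Hn)) => [->|ne] /=.
      by rewrite eqxx ltnn.
    have -> : (nat_of_ord j == n) = false => //.
    by apply/negbTE; apply: contra ne => /eqP e; apply/eqP/val_inj.
    by rewrite andbT.
  by rewrite subrK.
rewrite -{1}(preK x) outer //; apply: eq_bigl => j; exact: ltn_ord.
Qed.

End Gen.

Unset Implicit Arguments.

Section Main.
Variables (F : finFieldType) (r k : nat) (f : 'I_r -> hyper F k).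
Hypothesis Hpairs : forall (i j : 'I_r), i != j ->
     forall (e : 'I_3 -> 'I_k), {homo e : s t / (s < t)%N} ->
     forall (x : {ffun 'I_k -> F}),
       linear_pair (restrict (f i) e x) (restrict (f j) e x).

Definition Q (i i' : 'I_r) x (j l m : 'I_k) := exists (be be' : {perm F})
  (A1 A2 A3 : F -> F) (a1 a2 a3 b1 b2 b3 : F), forall z, ag F k x z j l m ->
  be (f i z) = a1 * A1 (z j) + a2 * A2 (z l) + a3 * A3 (z m) /\
  be' (f i' z) = b1 * A1 (z j) + b2 * A2 (z l) + b3 * A3 (z m).

Lemma Qsorted i i' x (j l m : 'I_k) : i != i' -> (j < l)%N -> (l < m)%N -> Q i i' x j l m.
Proof.
move=> ii' jl lm.
pose e (t : 'I_3) : 'I_k := if val t == 0%N then j else if val t == 1%N then l else m.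
have He : {homo e : s t / (s < t)%N}.
  move=> [[|[|[|s]]] Hs] [[|[|[|t]]] Ht] //= _; rewrite /e //=.
  exact: ltn_trans jl lm.
have [alpha [beta [a Ha]]] := Hpairs i i' ii' e He x.
pose t0 : 'I_3 := ord0; pose t1 : 'I_3 := @lift 3 ord0 ord0; pose t2 : 'I_3 := @lift 3 ord0 (@lift 2 ord0 ord0).
exists (beta ord0), (beta (@lift 2 ord0 ord0)), (alpha t0), (alpha t1), (alpha t2).
exists (a ord0 t0), (a ord0 t1), (a ord0 t2).
exists (a (@lift 2 ord0 ord0) t0), (a (@lift 2 ord0 ord0) t1), (a (@lift 2 ord0 ord0) t2).
move=> z az.
pose y : {ffun 'I_3 -> F} := [ffun t => z (e t)].
have Ry : forall h : hyper F k, restrict h e x y = h z.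
  move=> h; rewrite /restrict; congr h; apply/ffunP => i0; rewrite !ffunE.
  case: pickP => [t /eqP <-|H]; first by rewrite ffunE.
  symmetry; apply: az; apply/eqP => E.
  - by have := H t0; rewrite /e /= E eqxx.
  - by have := H t1; rewrite /e /= E eqxx.
  - by have := H t2; rewrite /e /= E eqxx.
have S : forall t, \sum_(s < 3) a t s * alpha s (y s) =
   a t t0 * alpha t0 (z j) + a t t1 * alpha t1 (z l) + a t t2 * alpha t2 (z m).
  move=> t; rewrite !big_ord_recl big_ord0 addr0 !ffunE addrA.
  by [].
split.
  by have := Ha ord0 y; rewrite /= Ry S.
by have := Ha (@lift 2 ord0 ord0) y; rewrite /= Ry S.
Qed.



Lemma ag12 x z (j l m : 'I_k) : ag F k x z j l m -> ag F k x z l j m.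
Proof. by move=> H i0 a b c; apply: H. Qed.
Lemma ag23 x z (j l m : 'I_k) : ag F k x z j l m -> ag F k x z j m l.
Proof. by move=> H i0 a b c; apply: H. Qed.

Lemma Qswap12 i i' x j l m : Q i i' x j l m -> Q i i' x l j m.
Proof.
move=> [be [be' [A1 [A2 [A3 [a1 [a2 [a3 [b1 [b2 [b3 H]]]]]]]]]]].
exists be, be', A2, A1, A3, a2, a1, a3, b2, b1, b3 => z az.
have [h1 h2] := H z (ag12 _ _ _ _ _ az); rewrite h1 h2; split; ring.
Qed.

Lemma Qswap23 i i' x j l m : Q i i' x j l m -> Q i i' x j m l.
Proof.
move=> [be [be' [A1 [A2 [A3 [a1 [a2 [a3 [b1 [b2 [b3 H]]]]]]]]]]].
exists be, be', A1, A3, A2, a1, a3, a2, b1, b3, b2 => z az.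
have [h1 h2] := H z (ag23 _ _ _ _ _ az); rewrite h1 h2; split; ring.
Qed.

Lemma Qall i i' x (j l m : 'I_k) : i != i' -> j != l -> l != m -> j != m -> Q i i' x j l m.
Proof.
move=> ii' jl lm jm.
have nv : forall a b : 'I_k, a != b -> (nat_of_ord a == nat_of_ord b) = false.
  by move=> a b ab; apply/negbTE; apply: contra ab => /eqP e; apply/eqP/val_inj.
case: (ltngtP j l) => [h1|h1|E]; last by move: (nv _ _ jl); rewrite E eqxx.
- case: (ltngtP l m) => [h2|h2|E]; last by move: (nv _ _ lm); rewrite E eqxx.
  + exact: Qsorted.
  + case: (ltngtP j m) => [h3|h3|E]; last by move: (nv _ _ jm); rewrite E eqxx.
    * by apply: Qswap23; apply: Qsorted.
    * by apply: Qswap23; apply: Qswap12; apply: Qsorted.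
- case: (ltngtP j m) => [h2|h2|E]; last by move: (nv _ _ jm); rewrite E eqxx.
  + by apply: Qswap12; apply: Qsorted => //; exact: ltn_trans h1 h2.
  + case: (ltngtP l m) => [h3|h3|E]; last by move: (nv _ _ lm); rewrite E eqxx.
    * by apply: Qswap12; apply: Qswap23; apply: Qsorted.
    * by apply: Qswap12; apply: Qswap23; apply: Qswap12; apply: Qsorted.
Qed.

Hypothesis Hlatin : forall i, latin_hypercube (f i).
Hypothesis Hadd : forall P : F -> F, (forall s t, P (s + t) = P s + P t) ->
  forall w, P w = w * P 1.
Hypothesis Hk3 : (3 <= k)%N.

Lemma face_of i i' : i != i' -> face1 F k (f i).
Proof.
move=> ii' x j l m jl lm jm.
have [be [be' [A1 [A2 [A3 [a1 [a2 [a3 [b1 [b2 [b3 H]]]]]]]]]]] := Qall _ _ x _ _ _ ii' jl lm jm.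
exists be, (fun t => a1 * A1 t), (fun t => a2 * A2 t), (fun t => a3 * A3 t).
by move=> z az; case: (H z az).
Qed.

Lemma exB i i' : i != i' -> exists Bp : {perm F}, Bp (f i (z0 F k)) = 0 /\
  forall x (a b : 'I_k), a != b -> Par F k Bp (f i) x a b.
Proof.
move=> ii'.
have H0 : (0 < k)%N by apply: leq_trans Hk3.
pose a0 : 'I_k := Ordinal H0.
have [b0 /andP [ba _]] := third k a0 a0 Hk3.
have [m0 /andP [ma mb]] := third k a0 b0 Hk3.
have ab : a0 != b0 by rewrite eq_sym.
have am : a0 != m0 by rewrite eq_sym.
have bm : b0 != m0 by rewrite eq_sym.
have [be [A1 [A2 [A3 Hf]]]] := face_of _ _ ii' (z0 F k) a0 b0 m0 ab bm am.
have inj : injective (fun y => be y - be (f i (z0 F k))).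
  by move=> y1 y2 /addIr /perm_inj.
exists (perm inj); split; first by rewrite permE subrr.
apply: (par_all F k Hadd _ (f i) (Hlatin i) (face_of _ _ ii') Hk3 a0 b0) => //.
apply: (par_of_form F k _ (f i) (z0 F k) (z0 F k) a0 b0 m0 a0 b0 1 (- be (f i (z0 F k))) A1 A2 A3) => //.
- by move=> z az; rewrite permE Hf // mul1r.
- by rewrite eqxx orbT.
Qed.

Lemma upd_z0 (j : 'I_k) : upd (z0 F k) j 0 = z0 F k.
Proof. by apply/ffunP => i0; rewrite !ffunE; case: eqP. Qed.

Lemma Einj i (Bp : {perm F}) (j : 'I_k) : injective (fun t => Bp (f i (upd (z0 F k) j t))).
Proof.
move=> t1 t2 /perm_inj E.
have [h hK _] := Hlatin i (z0 F k) j.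
by rewrite -(hK t1) -(hK t2) /= E.
Qed.

Lemma scal i i0 (B1 B2 : {perm F}) (j : 'I_k) : i != i0 ->
  B1 (f i (z0 F k)) = 0 -> B2 (f i0 (z0 F k)) = 0 ->
  (forall x (a b : 'I_k), a != b -> Par F k B1 (f i) x a b) ->
  (forall x (a b : 'I_k), a != b -> Par F k B2 (f i0) x a b) ->
  exists mu, forall t, B1 (f i (upd (z0 F k) j t)) = mu * B2 (f i0 (upd (z0 F k) j t)).
Proof.
move=> ii0 Z1 Z2 P1 P2.
have [l /andP [lj _]] := third k j j Hk3.
have [m /andP [mj ml]] := third k j l Hk3.
have jl : j != l by rewrite eq_sym.
have jm : j != m by rewrite eq_sym.
have lm : l != m by rewrite eq_sym.
have [be [be' [A1 [A2 [A3 [a1 [a2 [a3 [b1 [b2 [b3 H]]]]]]]]]]] := Qall _ _ (z0 F k) _ _ _ ii0 jl lm jm.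
have [c [d Bc]] := key F k Hadd B1 (f i) (z0 F k) j l m be (fun t => a1 * A1 t)
  (fun t => a2 * A2 t) (fun t => a3 * A3 t) (Hlatin i) jl lm jm (P1 _ _ _ jl)
  (fun z az => proj1 (H z az)).
have [c' [d' Bc']] := key F k Hadd B2 (f i0) (z0 F k) j l m be' (fun t => b1 * A1 t)
  (fun t => b2 * A2 t) (fun t => b3 * A3 t) (Hlatin i0) jl lm jm (P2 _ _ _ jl)
  (fun z az => proj2 (H z az)).
have azt t : ag F k (z0 F k) (upd (z0 F k) j t) j l m.
  by apply: ag_upd => //; rewrite eqxx.
have Vl t : upd (z0 F k) j t l = 0 by rewrite !ffunE (negbTE lj).
have Vm t : upd (z0 F k) j t m = 0 by rewrite !ffunE (negbTE mj).
have Vj t : upd (z0 F k) j t j = t by rewrite !ffunE eqxx.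
have E1 t : B1 (f i (upd (z0 F k) j t)) = c * a1 * (A1 t - A1 0).
  have e0 := Z1; rewrite -(upd_z0 j) Bc (proj1 (H _ (azt 0))) Vl Vm Vj in e0.
  rewrite Bc (proj1 (H _ (azt t))) Vl Vm Vj.
  have Hd : d = - (c * (a1 * A1 0 + a2 * A2 0 + a3 * A3 0)).
    by apply/eqP; rewrite -addr_eq0 addrC e0.
  rewrite Hd; ring.
have E2 t : B2 (f i0 (upd (z0 F k) j t)) = c' * b1 * (A1 t - A1 0).
  have e0 := Z2; rewrite -(upd_z0 j) Bc' (proj2 (H _ (azt 0))) Vl Vm Vj in e0.
  rewrite Bc' (proj2 (H _ (azt t))) Vl Vm Vj.
  have Hd : d' = - (c' * (b1 * A1 0 + b2 * A2 0 + b3 * A3 0)).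
    by apply/eqP; rewrite -addr_eq0 addrC e0.
  rewrite Hd; ring.
have nz : c' * b1 != 0.
  apply/eqP => e.
  have := Einj i0 B2 j; move=> inj.
  have : B2 (f i0 (upd (z0 F k) j 1)) = B2 (f i0 (upd (z0 F k) j 0)).
    by rewrite !E2 e !mul0r.
  by move/inj/eqP; rewrite oner_eq0.
exists (c * a1 / (c' * b1)) => t.
rewrite E1 E2 mulrA divfK //.
Qed.

End Main.

Theorem theorem3 (q : nat) (Hq : prime q) (r k : nat) (Hr : (2 <= r)%N) (Hk : (4 <= k)%N)
  (f : 'I_r -> hyper 'F_q k)
  (Hlatin : forall i, latin_hypercube (f i))
  (Hpairs : forall (i j : 'I_r), i != j ->
     forall (e : 'I_3 -> 'I_k), {homo e : s t / (s < t)%N} ->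
     forall (x : {ffun 'I_k -> 'F_q}),
       linear_pair (restrict (f i) e x) (restrict (f j) e x)) :
  linear_tuple f.
Proof.
have Hk3 : (3 <= k)%N by apply: leq_trans Hk.
have Hadd := Fp_additive Hq.
have H0 : (0 < r)%N by apply: leq_trans Hr.
pose i0 : 'I_r := Ordinal H0.
pose i1 : 'I_r := Ordinal Hr.
have i01 : i0 != i1 by [].
have HB : forall i, exists Bp : {perm 'F_q}, Bp (f i (z0 _ k)) = 0 /\
    forall x (a b : 'I_k), a != b -> Par _ k Bp (f i) x a b.
  move=> i; case: (eqVneq i i0) => [->|ne].
    exact: (exB _ _ _ f Hpairs Hlatin Hadd Hk3 _ _ i01).
  exact: (exB _ _ _ f Hpairs Hlatin Hadd Hk3 _ _ ne).
have [Bf HBf] := fin_all_exists HB.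
have HE : forall i (j : 'I_k), exists mu, forall t,
    Bf i (f i (upd (z0 _ k) j t)) = mu * Bf i0 (f i0 (upd (z0 _ k) j t)).
  move=> i j; case: (eqVneq i i0) => [->|ne]; first by exists 1 => t; rewrite mul1r.
  exact: (scal _ _ _ f Hpairs Hlatin Hadd Hk3 _ _ _ _ j ne (HBf i).1 (HBf i0).1 (HBf i).2 (HBf i0).2).
have nz : forall j : 'I_k, Bf i0 (f i0 (upd (z0 _ k) j 1)) != 0.
  move=> j; apply/eqP => e.
  have e0 := (HBf i0).1; rewrite -(upd_z0 _ _ j) in e0.
  have := Einj _ _ _ f Hlatin i0 (Bf i0) j 1 0; rewrite /= e e0 => /(_ erefl) /eqP.
  by rewrite oner_eq0.
exists (fun j => perm (Einj _ _ _ f Hlatin i0 (Bf i0) j)), Bf,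
  (fun i j => Bf i (f i (upd (z0 _ k) j 1)) / Bf i0 (f i0 (upd (z0 _ k) j 1))).
move=> i x.
rewrite (sum_form _ k (Bf i) (f i) (HBf i).1 (HBf i).2 x).
apply: eq_bigr => j _; rewrite permE.
have [mu Hmu] := HE i j.
by rewrite !Hmu mulfK.
Qed.
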